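(* Let $A\in\mathcal{C}_n$ have unit diagonal. Let $I_1,\dots,I_m$ be the elements of $\mathcal{I}=\operatorname{Supp}(\mathcal{M}(A))$ ordered by nondecreasing cardinality (each has cardinality at least 2), and let $m_2$ be the number with cardinality 2. Let $G_2(\mathcal{I})$ be the graph with vertex set $\{1,\dots,n\}$ and edges $I_1,\dots,I_{m_2}$, and let $G_{>2}(\mathcal{I})$ be the bipartite graph with vertex classes $V=\{1,\dots,n\}$, $W=\{m_2+1,\dots,m\}$, in which $(v,w)\in V\times W$ is an edge iff $v\in I_w$. Let $G_{2,1},\dots,G_{2,r}$ be the connected components of $G_2(\mathcal{I})$ which are bipartite. If the linear span of $\mathcal{M}(A)$ is $\mathbb{R}^n$, then there exist edges $(v_1,w_1),\dots,(v_r,w_r)$ of $G_{>2}(\mathcal{I})$ such that $v_j$ is a vertex of $G_{2,j}$ for all $j=1,\dots,r$ and $w_1,\dots,w_r$ are mutually different.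
   Context: $\mathcal{C}_n$ denotes the cone of copositive matrices: real symmetric $n\times n$ matrices $A$ with $x^TAx\ge 0$ for all $x\in\mathbb{R}^n_+$. A zero of $A$ is a nonzero $u\in\mathbb{R}^n_+$ with $u^TAu=0$; $\operatorname{Supp}(u)=\{i:u_i\ne0\}$; a zero $u$ is minimal if there is no zero $v$ with $\operatorname{Supp}(v)\subsetneq\operatorname{Supp}(u)$; $\mathcal{M}(A)$ is the set of minimal zeros and $\operatorname{Supp}(\mathcal{M}(A))=\{\operatorname{Supp}(u):u\in\mathcal{M}(A)\}$. *)

(* Defs.v *)
From HB Require Import structures.
From mathcomp Require Import all_boot all_order all_algebra.
Set Implicit Arguments. Unset Strict Implicit. Unset Printing Implicit Defensive.
Import Order.TTheory GRing.Theory Num.Theory.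
Local Open Scope ring_scope.

Section Copos.
Variables (R : realFieldType) (n : nat).
Implicit Types (A : 'M[R]_n) (u v : 'cV[R]_n).

Definition nonneg u : Prop := forall i, 0 <= u i 0.

Definition qform A u : R := (u^T *m A *m u) 0 0.

Definition copositive A : Prop :=
  A^T = A /\ forall x, nonneg x -> 0 <= qform A x.

Definition supp u : {set 'I_n} := [set i | u i 0 != 0].

Definition is_zero A u : Prop := nonneg u /\ u != 0 /\ qform A u = 0.

Definition minimal_zero A u : Prop :=
  is_zero A u /\ ~ exists v, is_zero A v /\ supp v \proper supp u.

Definition in_SuppM A (I : {set 'I_n}) : Prop :=
  exists u, minimal_zero A u /\ supp u = I.

Definition span_MA_full A : Prop :=
  forall y : 'cV[R]_n, exists (k : nat) (us : 'I_k -> 'cV[R]_n) (c : 'I_k -> R),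
    (forall l, minimal_zero A (us l)) /\ y = \sum_(l < k) c l *: us l.

Definition edge2 A (i j : 'I_n) : Prop := i <> j /\ in_SuppM A [set i; j].

Inductive conn2 A (i : 'I_n) : 'I_n -> Prop :=
| conn2_refl : conn2 A i i
| conn2_step j k : conn2 A i j -> edge2 A j k -> conn2 A i k.

Definition component2 A (C : {set 'I_n}) : Prop :=
  exists2 i0, i0 \in C & forall j, j \in C <-> conn2 A i0 j.

Definition bip_component2 A (C : {set 'I_n}) : Prop :=
  component2 A C /\
  exists col : 'I_n -> bool,
    forall i j, i \in C -> j \in C -> edge2 A i j -> col i <> col j.

End Copos.

(* Main.v *)
Require Import Defs.
From HB Require Import structures.
From mathcomp Require Import all_boot all_order all_algebra.
From mathcomp Require Import ring lra.
From mathcomp Require Import fingroup perm.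
From Stdlib Require Import ClassicalEpsilon.
Import Order.TTheory GRing.Theory Num.Theory.
Local Open Scope ring_scope.
Set Implicit Arguments. Unset Strict Implicit.

Lemma qform_sum (R : realFieldType) (n : nat) (A : 'M[R]_n) (w : 'cV[R]_n) :
  qform A w = \sum_i w i 0 * (A *m w) i 0.
Proof. by rewrite /qform -mulmxA mxE; apply: eq_bigr => i _; rewrite mxE. Qed.

Lemma qform_add_delta (R : realFieldType) (n : nat) (A : 'M[R]_n) (u : 'cV[R]_n) i t :
  A^T = A ->
  qform A (u + t *: delta_mx i 0) = qform A u + 2 * t * (A *m u) i 0 + t ^+ 2 * A i i.
Proof.
move=> AT; rewrite /qform.
set x := t *: delta_mx i 0.
have e1 : x^T *m A *m u = t *: row i (A *m u).
  by rewrite /x linearZ /= -!scalemxAl trmx_delta -mulmxA -rowE.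
have e2 : u^T *m A *m x = t *: row i (A *m u).
  rewrite /x -scalemxAr -colE; congr (_ *: _).
  rewrite -[col i _]trmxK tr_col trmx_mul trmxK AT.
  by apply/matrixP => a b; rewrite !ord1 mxE.
have e3 : x^T *m A *m x = (t * t) *: col i (row i A).
  by rewrite /x linearZ /= linearZ /= -!scalemxAl trmx_delta -rowE -colE scalerA.
rewrite linearD /= [(u + x)^T]linearD /= !mulmxDl e1 e2 e3 !mxE; ring.
Qed.

Lemma zero_vanish (R : realFieldType) (n : nat) (A : 'M[R]_n) (u : 'cV[R]_n) i :
  copositive A -> (forall i, A i i = 1) -> is_zero A u -> u i 0 != 0 ->
  (A *m u) i 0 = 0.
Proof.
move=> [AT cop] d1 [nn [nz q0]] ui.
have p0 : 0 < u i 0 by rewrite lt_def ui nn.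
have H t : - u i 0 <= t -> 0 <= 2 * t * (A *m u) i 0 + t ^+ 2.
  move=> ht.
  have := cop (u + t *: delta_mx i 0).
  rewrite qform_add_delta // q0 d1 add0r mulr1; apply.
  move=> l; rewrite !mxE; case: (eqVneq l i) => [->|_] /=.
    by rewrite mulr1; lra.
  by rewrite mulr0 addr0.
set a := (A *m u) i 0 in H *; set p := u i 0 in p0 H *.
have [a0|a0|//] := ltgtP a 0.
  have := H (- a); rewrite expr2; move=> h; have : 0 <= 2 * - a * a + - a * - a by apply: h; lra.
  nra.
have [pa|pa] := lerP p a.
  have := H (- p); rewrite expr2; move=> h; have : 0 <= 2 * - p * a + - p * - p by apply: h; lra.
  nra.
have := H (- a); rewrite expr2; move=> h; have : 0 <= 2 * - a * a + - a * - a by apply: h; lra.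
nra.
Qed.

Lemma in_supp (R : realFieldType) (n : nat) (u : 'cV[R]_n) i :
  (i \in supp u) = (u i 0 != 0).
Proof. by rewrite inE. Qed.

Lemma supp_nonempty (R : realFieldType) (n : nat) (u : 'cV[R]_n) :
  u != 0 -> exists i, i \in supp u.
Proof.
move=> nz; apply/existsP; apply: contraNT nz; rewrite negb_exists => /forallP H.
apply/eqP/matrixP => i j; rewrite !ord1 mxE; move: (H i); rewrite in_supp.
by move/negbNE/eqP.
Qed.

Lemma minzero_unique (R : realFieldType) (n : nat) (A : 'M[R]_n) (u v : 'cV[R]_n) :
  copositive A -> (forall i, A i i = 1) ->
  minimal_zero A u -> minimal_zero A v -> supp u = supp v ->
  exists c, v = c *: u.
Proof.
move=> cop d1 [zu _] [zv minv] e.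
have [i1 i1I] := supp_nonempty zu.2.1.
pose F := fun i => v i 0 / u i 0.
have [i0 i0I Hmin] := @arg_minP _ R 'I_n i1 (mem (supp u)) F i1I.
set t := F i0.
have upos l : l \in supp u -> 0 < u l 0.
  by rewrite in_supp => h; rewrite lt_def h zu.1.
have out l : l \notin supp u -> u l 0 = 0 /\ v l 0 = 0.
  move=> h; have h2 : l \notin supp v by rewrite -e.
  by move: h h2; rewrite !in_supp !negbK => /eqP -> /eqP ->.
pose w := v - t *: u.
have wE l : w l 0 = v l 0 - t * u l 0 by rewrite !mxE.
case: (eqVneq w 0) => [w0|wn0].
  by exists t; apply/eqP; rewrite -subr_eq0; apply/eqP.
exfalso; apply: minv; exists w; split.
  split; [|split=> //].
    move=> l; rewrite wE; case: (boolP (l \in supp u)) => lI.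
      have := Hmin l lI; rewrite /F /t -/(F i0) => h.
      have ul := upos l lI.
      rewrite subr_ge0 -ler_pdivlMr //.
    by have [-> ->] := out l lI; rewrite mulr0 subr0.
  rewrite qform_sum; apply: big1 => l _.
  case: (boolP (l \in supp u)) => lI.
    have h1 := zero_vanish (i := l) cop d1 zu.
    have h2 := zero_vanish (i := l) cop d1 zv.
    rewrite e !in_supp in lI h1 h2 *.
    have -> : (A *m w) l 0 = (A *m v) l 0 - t * (A *m u) l 0.
      by rewrite mulmxBr -scalemxAr !mxE.
    by rewrite (h2 lI) h1 ?mulr0 ?subr0 ?mulr0 // -in_supp e in_supp.
  by have [h1 h2] := out l lI; rewrite wE h1 h2 mulr0 subr0 mul0r.
apply/properP; split.
  apply/subsetP => l; rewrite -e; apply: contraTT => lI.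
  by rewrite in_supp negbK wE; have [-> ->] := out l lI; rewrite mulr0 subr0.
exists i0; first by rewrite -e.
rewrite in_supp negbK wE /t /F divfK //; last by have := upos i0 i0I; rewrite lt0r => /andP[].
by rewrite subrr.
Qed.

Lemma edge2_sym (R : realFieldType) (n : nat) (A : 'M[R]_n) i j :
  edge2 A i j -> edge2 A j i.
Proof. by case=> ne h; split; [by move=> e; apply: ne | rewrite setUC]. Qed.

Lemma conn2_trans (R : realFieldType) (n : nat) (A : 'M[R]_n) i j k :
  conn2 A i j -> conn2 A j k -> conn2 A i k.
Proof. by move=> hij; elim=> [//|l m _ IH e]; apply: conn2_step IH e. Qed.

Lemma conn2_sym (R : realFieldType) (n : nat) (A : 'M[R]_n) i j :
  conn2 A i j -> conn2 A j i.
Proof.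
elim=> [|l m _ IH e]; first exact: conn2_refl.
apply: conn2_trans IH; apply: conn2_step (conn2_refl _ _) _; exact: edge2_sym.
Qed.

Lemma comp_closed (R : realFieldType) (n : nat) (A : 'M[R]_n) (C : {set 'I_n}) i j :
  component2 A C -> i \in C -> edge2 A i j -> j \in C.
Proof.
move=> [i0 _ H] iC e; apply/H; apply: conn2_step e; exact/H.
Qed.

Lemma comp_eq (R : realFieldType) (n : nat) (A : 'M[R]_n) C1 C2 x :
  component2 A C1 -> component2 A C2 -> x \in C1 -> x \in C2 -> C1 = C2.
Proof.
move=> [p1 _ H1] [p2 _ H2] x1 x2; apply/setP => j.
have c1 := (iffLR (H1 x) x1); have c2 := (iffLR (H2 x) x2).
apply/idP/idP => h.
  apply/H2; apply: conn2_trans c2 _; apply: conn2_trans (conn2_sym c1) _; exact/H1.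
apply/H1; apply: conn2_trans c1 _; apply: conn2_trans (conn2_sym c2) _; exact/H2.
Qed.

Lemma sum_supp1 (R : realFieldType) (n : nat) (F : 'I_n -> R) (v : 'cV[R]_n) i :
  (forall l, l != i -> v l 0 = 0) -> \sum_l F l * v l 0 = F i * v i 0.
Proof. by move=> H; rewrite (bigD1 i) //= big1 ?addr0 // => l /H ->; rewrite mulr0. Qed.

Lemma sum_supp2 (R : realFieldType) (n : nat) (F : 'I_n -> R) (v : 'cV[R]_n) i j :
  i != j -> (forall l, l != i -> l != j -> v l 0 = 0) ->
  \sum_l F l * v l 0 = F i * v i 0 + F j * v j 0.
Proof.
move=> ij H; rewrite (bigD1 i) //= (bigD1 j) 1?eq_sym //= big1 ?addr0 //.
by move=> l /andP[li lj]; rewrite H ?mulr0.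
Qed.

Lemma small_zero (R : realFieldType) (n : nat) (A : 'M[R]_n) (v : 'cV[R]_n) :
  copositive A -> (forall i, A i i = 1) -> minimal_zero A v -> (#|supp v| <= 2)%N ->
  exists i j, [/\ i != j, edge2 A i j, v i 0 = v j 0 &
                forall l, l != i -> l != j -> v l 0 = 0].
Proof.
move=> cop d1 mv; have [zv _] := mv.
have [i0 i0S] := supp_nonempty zv.2.1.
have notin l : l \notin supp v -> v l 0 = 0 by rewrite in_supp negbK => /eqP.
have pos l : l \in supp v -> 0 < v l 0.
  by rewrite in_supp => h; rewrite lt_def h zv.1.
case cardS: #|supp v| => [|[|[|m]]] // _.
- by move/cards0_eq: cardS => e; rewrite e inE in i0S.
- move/eqP/cards1P: cardS => [i e].
  have iS : i \in supp v by rewrite e set11.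
  have := zero_vanish (i := i) cop d1 zv; rewrite -in_supp => /(_ iS).
  rewrite mxE (@sum_supp1 _ _ _ _ i) ?d1 ?mul1r; last first.
    by move=> l li; apply: notin; rewrite e in_set1.
  by move=> h; have := pos i iS; rewrite h ltxx.
- move/eqP/cards2P: cardS => [i [j [ij e]]].
  have iS : i \in supp v by rewrite e !inE eqxx.
  have jS : j \in supp v by rewrite e !inE eqxx orbT.
  have off l : l != i -> l != j -> v l 0 = 0.
    by move=> li lj; apply: notin; rewrite e !inE negb_or li lj.
  have hi := zero_vanish (i := i) cop d1 zv; rewrite -in_supp in hi; move/(_ iS): hi.
  have hj := zero_vanish (i := j) cop d1 zv; rewrite -in_supp in hj; move/(_ jS): hj.
  rewrite !mxE !(sum_supp2 _ ij off) !d1 !mul1r.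
  have Aji : A j i = A i j by have := congr1 (fun M : 'M[R]_n => M i j) cop.1; rewrite mxE.
  rewrite Aji => hj hi.
  have pi := pos i iS; have pj := pos j jS.
  exists i, j; split => //.
    split; first by move=> eij; rewrite eij eqxx in ij.
    by exists v; split.
  nra.
Qed.

Definition isbip (R : realFieldType) (n : nat) (A : 'M[R]_n) (C : {set 'I_n}) : bool :=
  if excluded_middle_informative (bip_component2 A C) then true else false.

Lemma isbipP (R : realFieldType) (n : nat) (A : 'M[R]_n) (C : {set 'I_n}) :
  isbip A C <-> bip_component2 A C.
Proof. by rewrite /isbip; case: excluded_middle_informative. Qed.

Definition colprop (R : realFieldType) (n : nat) (A : 'M[R]_n) (C : {set 'I_n})
  (col : 'I_n -> bool) :=
  forall i j, i \in C -> j \in C -> edge2 A i j -> col i <> col j.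

Definition colof (R : realFieldType) (n : nat) (A : 'M[R]_n) (C : {set 'I_n}) : 'I_n -> bool :=
  match excluded_middle_informative (exists col, colprop A C col) with
  | left H => proj1_sig (constructive_indefinite_description _ H)
  | right _ => fun _ => true end.

Lemma colofP (R : realFieldType) (n : nat) (A : 'M[R]_n) (C : {set 'I_n}) :
  bip_component2 A C -> colprop A C (colof A C).
Proof.
move=> [_ H]; rewrite /colof; case: excluded_middle_informative => [H'|//].
exact: proj2_sig (constructive_indefinite_description _ H').
Qed.

Definition zvec (R : realFieldType) (n : nat) (A : 'M[R]_n) (C : {set 'I_n}) : 'cV[R]_n :=
  \col_l (if l \in C then (if colof A C l then 1 else -1) else 0).

Lemma zvec_edge (R : realFieldType) (n : nat) (A : 'M[R]_n) (C : {set 'I_n}) i j :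
  bip_component2 A C -> edge2 A i j -> zvec A C i 0 + zvec A C j 0 = 0.
Proof.
move=> bC e; have cP := colofP bC; rewrite !mxE.
case: (boolP (i \in C)) => iC.
  have jC : j \in C := comp_closed bC.1 iC e.
  rewrite jC; have := cP i j iC jC e.
  by case: (colof A C i); case: (colof A C j) => // _; rewrite ?subrr ?addrN ?addNr.
case: (boolP (j \in C)) => jC; last by rewrite addr0.
by have := comp_closed bC.1 jC (edge2_sym e); rewrite (negPf iC).
Qed.

Definition uprop (R : realFieldType) (n : nat) (A : 'M[R]_n) (T : {set 'I_n}) u :=
  minimal_zero A u /\ supp u = T /\ (2 < #|T|)%N.

Definition uvec (R : realFieldType) (n : nat) (A : 'M[R]_n) (T : {set 'I_n}) : 'cV[R]_n :=
  match excluded_middle_informative (exists u, uprop A T u) with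
  | left H => proj1_sig (constructive_indefinite_description _ H)
  | right _ => 0 end.

Lemma uvecP (R : realFieldType) (n : nat) (A : 'M[R]_n) (T : {set 'I_n}) :
  (exists u, uprop A T u) -> uprop A T (uvec A T).
Proof.
move=> H; rewrite /uvec; case: excluded_middle_informative => [H'|//].
exact: proj2_sig (constructive_indefinite_description _ H').
Qed.

Lemma uvec_nz (R : realFieldType) (n : nat) (A : 'M[R]_n) (T : {set 'I_n}) :
  uvec A T != 0 -> uprop A T (uvec A T).
Proof.
rewrite /uvec; case: excluded_middle_informative => [H' _|]; last by rewrite eqxx.
exact: proj2_sig (constructive_indefinite_description _ H').
Qed.

Definition dotv (R : realFieldType) (n : nat) (x y : 'cV[R]_n) := \sum_l x l 0 * y l 0.

Lemma dotvC (R : realFieldType) (n : nat) (x y : 'cV[R]_n) : dotv x y = dotv y x.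
Proof. by apply: eq_bigr => l _; rewrite mulrC. Qed.

Lemma dotvZr (R : realFieldType) (n : nat) (x y : 'cV[R]_n) c :
  dotv x (c *: y) = c * dotv x y.
Proof. by rewrite /dotv mulr_sumr; apply: eq_bigr => l _; rewrite mxE mulrCA. Qed.

Lemma dotv_suml (R : realFieldType) (n k : nat) (x : 'I_k -> 'cV[R]_n) c y :
  dotv (\sum_(r < k) c r *: x r) y = \sum_(r < k) c r * dotv (x r) y.
Proof.
rewrite /dotv (eq_bigr (fun l => \sum_r c r * (x r l 0 * y l 0))); last first.
  by move=> l _; rewrite summxE mulr_suml; apply: eq_bigr => r _; rewrite mxE mulrA.
by rewrite exchange_big; apply: eq_bigr => r _; rewrite mulr_sumr.
Qed.

Lemma zvec_orth (R : realFieldType) (n : nat) (A : 'M[R]_n) (C : {set 'I_n}) v :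
  copositive A -> (forall i, A i i = 1) ->
  bip_component2 A C -> minimal_zero A v -> (#|supp v| <= 2)%N -> dotv (zvec A C) v = 0.
Proof.
move=> cop d1 bC mv hs.
have [i [j [ij e vij off]]] := small_zero cop d1 mv hs.
rewrite /dotv (sum_supp2 (fun l => zvec A C l 0) ij off) vij -mulrDl.
by rewrite (zvec_edge bC e) mul0r.
Qed.

Lemma kernel_trivial (R : realFieldType) (n k : nat) (A : 'M[R]_n)
  (Cs : 'I_k -> {set 'I_n}) (a : 'I_k -> R) :
  copositive A -> (forall i, A i i = 1) -> span_MA_full A ->
  (forall r, bip_component2 A (Cs r)) -> injective Cs ->
  (forall T, dotv (\sum_r a r *: zvec A (Cs r)) (uvec A T) = 0) -> forall r, a r = 0.
Proof.
move=> cop d1 span bip inj Hz.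
set z := \sum_r a r *: zvec A (Cs r) in Hz *.
have hz v : minimal_zero A v -> dotv z v = 0.
  move=> mv; case: (leqP #|supp v| 2) => hs.
    by rewrite /z dotv_suml big1 // => r _; rewrite zvec_orth ?mulr0.
  have Hex : exists u, uprop A (supp v) u by exists v.
  have [mu [su _]] := uvecP Hex.
  have [c ->] := minzero_unique cop d1 mu mv su.
  by rewrite dotvZr Hz mulr0.
have zz : dotv z z = 0.
  have [kk [us [c [mus ez]]]] := span z.
  rewrite {2}ez dotvC dotv_suml big1 // => l _.
  by rewrite dotvC hz ?mulr0.
have z0 l : z l 0 = 0.
  have nn : forall i, predT i -> 0 <= z i 0 * z i 0 by move=> i _; rewrite -expr2 sqr_ge0.
  have := @psumr_eq0P _ _ predT (fun l => z l 0 * z l 0) nn zz l isT.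
  by move/eqP; rewrite mulf_eq0 orbb => /eqP.
move=> r; have [i0 i0C _] := (bip r).1.
have := z0 i0; rewrite /z summxE (bigD1 r) //= big1 ?addr0.
  rewrite !mxE i0C; case: (colof A (Cs r) i0) => /eqP; rewrite mulf_eq0 ?oppr_eq0 oner_eq0 orbF.
    by move/eqP.
  by move/eqP.
move=> r' rr; rewrite !mxE.
case: (boolP (i0 \in Cs r')) => h; last by rewrite mulr0.
have := comp_eq (bip r').1 (bip r).1 h i0C => /inj e; by rewrite e eqxx in rr.
Qed.

Unset Implicit Arguments.

Theorem lemma5p2 (R : realFieldType) (n : nat) (A : 'M[R]_n) :
  copositive A ->
  (forall i, A i i = 1) ->
  span_MA_full A ->
  exists f : {set 'I_n} -> {set 'I_n},
    (forall C, bip_component2 A C ->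
       [/\ in_SuppM A (f C), (2 < #|f C|)%N & exists2 v, v \in C & v \in f C]) /\
    (forall C1 C2, bip_component2 A C1 -> bip_component2 A C2 ->
       f C1 = f C2 -> C1 = C2).
Proof.
move=> cop d1 span.
pose B := [set C : {set 'I_n} | isbip A C].
pose Cs : 'I_#|B| -> {set 'I_n} := fun r => enum_val r.
have CsB r : Cs r \in B := enum_valP r.
have bip r : bip_component2 A (Cs r) by apply/isbipP; move: (CsB r); rewrite inE.
have inj : injective Cs := enum_val_inj.
pose N := #|{set 'I_n}|.
pose M : 'M[R]_(#|B|, N) := \matrix_(r, b) dotv (zvec A (Cs r)) (uvec A (enum_val b)).
have rf : row_free M.
  rewrite -kermx_eq0 -submx0; apply/row_subP => r.
  set a := row r (kermx M).
  have aM : a *m M = 0 by apply/sub_kermxP; exact: row_sub.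
  suff -> : a = 0 by rewrite sub0mx.
  apply/rowP => r'; rewrite [RHS]mxE.
  apply: (@kernel_trivial R n #|B| A Cs (fun r => a 0 r) cop d1 span bip inj) => T.
  have := congr1 (fun X : 'M[R]_(1, N) => X 0 (enum_rank T)) aM; rewrite !mxE => h.
  rewrite dotv_suml -[RHS]h; apply: eq_bigr => r'' _; congr (_ * _); rewrite /M mxE; congr (dotv _ (uvec A _)); symmetry; apply: enum_rankK.
have fA : row_full M^T by rewrite /row_full mxrank_tr.
pose f := fullrankfun fA.
pose X := rowsub f M^T.
have Xu : X \in unitmx := fullrowsub_unit fA.
have dX : \det X != 0 by rewrite unitmxE unitfE in Xu.
have [s Hs] : exists s : {perm 'I_#|B|}, \prod_i X i (s i) != 0.
  apply/existsP; apply: contraNT dX => /existsPn H.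
  by apply/eqP; apply: big1 => s' _; rewrite (eqP (negbNE (H s'))) mulr0.
move/prodf_neq0: Hs => Hs.
have Hent i : dotv (zvec A (Cs (s i))) (uvec A (enum_val (f i))) != 0.
  by have := Hs i isT; rewrite !mxE.
pose g := fun C => if [pick r | Cs r == C] is Some r then enum_val (f ((s^-1)%g r))
                   else set0.
have gE C : bip_component2 A C ->
    exists2 r, Cs r = C & g C = enum_val (f ((s^-1)%g r)).
  move=> bC; have CB : C \in B by rewrite inE; apply/isbipP.
  rewrite /g; case: pickP => [r' /eqP r'C | H]; first by exists r'.
  by have := H (enum_rank_in CB C); rewrite /Cs enum_rankK_in // eqxx.
exists g; split.
  move=> C bC; have [r rC ->] := gE C bC.
  set i := (s^-1)%g r.
  have si : s i = r by rewrite permKV.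
  have := Hent i; rewrite si rC => hne.
  set T := enum_val (f i) in hne *.
  have hu : uvec A T != 0.
    apply: contraNneq hne => ->; rewrite /dotv big1 // => l _; by rewrite [(0 : 'cV[R]_n) l 0]mxE mulr0.
  have [mu [su c2]] := uvec_nz hu.
  split => //; first by exists (uvec A T).
  have [l hl] : exists l, zvec A C l 0 * uvec A T l 0 != 0.
    apply/existsP; apply: contraNT hne => /existsPn H.
    by apply/eqP; apply: big1 => l _; apply/eqP/negbNE/H.
  rewrite mulf_eq0 negb_or in hl; case/andP: hl => h1 h2.
  exists l; last by rewrite -su in_supp.
  by move: h1; rewrite mxE; case: (l \in C) => //; rewrite eqxx.
move=> C1 C2 b1 b2.
have [r1 <- ->] := gE C1 b1; have [r2 <- ->] := gE C2 b2.
by move/enum_val_inj/fullrankfun_inj/perm_inj ->.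
Qed.
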